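(* (i) There exists a set $A \subseteq \mathbb{N}$ that contains arithmetic progressions of every finite length but is not fractionally dense. (ii) There exists a set $A \subseteq \mathbb{N}$ that is fractionally dense but contains no arithmetic progression of length $3$ or more.
   Context: $\mathbb{N} = \{1,2,3,\ldots\}$. For $A \subseteq \mathbb{N}$, the quotient set is $R(A) = \{a/a' : a, a' \in A\}$, and $A$ is called fractionally dense if the closure of $R(A)$ in $\mathbb{R}$ equals $[0,\infty)$. An arithmetic progression of length $n$ in $A$ is a sequence $c, c+d, c+2d, \ldots, c+(n-1)d$ of elements of $A$ with $d \geq 1$ an integer. *)

(* Defs.v *)
From Stdlib Require Import Reals Lra Lia.
Open Scope R_scope.

(* Subsets of N = {1,2,3,...}: predicates on nat all of whose elements are >= 1. *)
Definition subset_posnat (A : nat -> Prop) : Prop := forall a, A a -> (1 <= a)%nat.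

Definition quotient_set (A : nat -> Prop) (r : R) : Prop :=
  exists a a', A a /\ A a' /\ r = INR a / INR a'.

Definition closure_R (S : R -> Prop) (x : R) : Prop :=
  forall eps, 0 < eps -> exists y, S y /\ Rabs (y - x) < eps.

Definition fractionally_dense (A : nat -> Prop) : Prop :=
  forall x : R, closure_R (quotient_set A) x <-> 0 <= x.

Definition has_AP (A : nat -> Prop) (n : nat) : Prop :=
  exists c d : nat, (1 <= d)%nat /\ forall i : nat, (i < n)%nat -> A (c + i * d)%nat.

(* Main.v *)
Require Import Defs.
From Stdlib Require Import Reals Lra Lia Arith Cantor ZArith.
Open Scope R_scope.
Module P1.

Definition A1 (a : nat) : Prop := exists k, (10^k <= a <= 2*10^k)%nat.

Lemma A1_gap a b : A1 a -> A1 b -> (a <= 2*b \/ 5*b <= a)%nat.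
Proof.
  intros [k Hk] [j Hj].
  destruct (le_lt_dec k j) as [h|h].
  - left. pose proof (Nat.pow_le_mono_r 10 k j ltac:(lia) h). lia.
  - right. pose proof (Nat.pow_le_mono_r 10 (S j) k ltac:(lia) h).
    simpl in H. lia.
Qed.

Lemma part1 : exists A : nat -> Prop,
     subset_posnat A /\ (forall n : nat, has_AP A n) /\ ~ fractionally_dense A.
Proof.
  exists A1. split; [|split].
  - intros a [k Hk]. pose proof (Nat.pow_nonzero 10 k ltac:(lia)). lia.
  - intros n. exists (10^n)%nat, 1%nat. split; [lia|].
    intros i Hi. exists n. pose proof (Nat.pow_gt_lin_r 10 n ltac:(lia)). lia.
  - intros FD. destruct (proj2 (FD 3) ltac:(lra) (1/2) ltac:(lra)) as [y [[a [a' [Ha [Ha' Hy]]]] Hr]].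
    apply Rabs_def2 in Hr.
    assert (Hpos : (1 <= a')%nat).
    { destruct Ha' as [k Hk]. pose proof (Nat.pow_nonzero 10 k ltac:(lia)). lia. }
    apply le_INR in Hpos. simpl in Hpos.
    assert (Hya : INR a = y * INR a') by (subst y; field; lra).
    destruct (A1_gap a a' Ha Ha') as [h|h]; apply le_INR in h; rewrite mult_INR in h; simpl in h; nra.
Qed.
End P1.
Module P2.

Definition M (k : nat) : nat := (4 ^ (k*k))%nat.

Definition inB (k a : nat) : Prop :=
  exists u, (u = fst (of_nat k) + 1 \/ u = snd (of_nat k) + 1)%nat /\ a = (u * M k)%nat.

Definition A2 (a : nat) : Prop := exists k, inB k a.

Lemma M_pos k : (1 <= M k)%nat.
Proof. unfold M. pose proof (Nat.pow_nonzero 4 (k*k) ltac:(lia)). lia. Qed.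

Lemma u_bound k u : (u = fst (of_nat k) + 1 \/ u = snd (of_nat k) + 1)%nat -> (1 <= u <= k+1)%nat.
Proof.
  intros H. pose proof (cancel_to_of k) as E. destruct (of_nat k) as [x y] eqn:Ek.
  pose proof (to_nat_non_decreasing x y). simpl in H. lia.
Qed.

Lemma sep k j a : (k < j)%nat -> inB k a -> (2 * a < M j)%nat.
Proof.
  intros Hkj [u [Hu ->]]. apply u_bound in Hu.
  unfold M.
  assert (H1 : (4 ^ ((k*k) + (2*k+1)) <= 4 ^ (j*j))%nat).
  { apply Nat.pow_le_mono_r; nia. }
  rewrite Nat.pow_add_r in H1.
  assert (H2 : (4 ^ (2*k+1) = 4 * 16 ^ k)%nat).
  { rewrite Nat.pow_add_r, Nat.pow_mul_r. simpl. lia. }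
  pose proof (Nat.pow_gt_lin_r 16 k ltac:(lia)).
  rewrite H2 in H1.
  assert (u * 4 ^ (k*k) <= (k+1) * 4^(k*k))%nat by (apply Nat.mul_le_mono_r; lia).
  assert ((k+1) * 4^(k*k) <= 16^k * 4^(k*k))%nat by (apply Nat.mul_le_mono_r; lia).
  pose proof (Nat.pow_nonzero 4 (k*k) ltac:(lia)).
  nia.
Qed.

Lemma inB_ge k a : inB k a -> (M k <= a)%nat.
Proof. intros [u [Hu ->]]. apply u_bound in Hu. nia. Qed.

Lemma no3 a b e : A2 a -> A2 b -> A2 e -> (a < b)%nat -> (b < e)%nat -> (a + e = 2 * b)%nat -> False.
Proof.
  intros [k1 H1] [k2 H2] [k3 H3] Hab Hbe Hs.
  destruct (lt_eq_lt_dec k2 k3) as [[h|h]|h].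
  - pose proof (sep _ _ _ h H2). pose proof (inB_ge _ _ H3). lia.
  - subst k3.
    destruct (lt_eq_lt_dec k1 k2) as [[h|h]|h].
    + pose proof (sep _ _ _ h H1).
      destruct H2 as [u2 [Hu2 ->]]. destruct H3 as [u3 [Hu3 ->]].
      pose proof (M_pos k2).
      destruct (le_lt_dec (2*u2) u3) as [g|g].
      * assert (2*u2*M k2 <= u3 * M k2)%nat by (apply Nat.mul_le_mono_r; lia).
        destruct H1 as [u1 [Hu1 ->]]. apply u_bound in Hu1.
        assert (M k1 <= u1 * M k1)%nat by nia. pose proof (M_pos k1). lia.
      * assert ((u3+1)*M k2 <= 2*u2 * M k2)%nat by (apply Nat.mul_le_mono_r; lia).
        lia.
    + subst k1.
      destruct H1 as [u1 [Hu1 ->]]. destruct H2 as [u2 [Hu2 ->]]. destruct H3 as [u3 [Hu3 ->]].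
      assert (u1 < u2)%nat.
      { destruct (le_lt_dec u2 u1) as [g|g]; [|exact g].
        assert (u2 * M k2 <= u1 * M k2)%nat by (apply Nat.mul_le_mono_r; lia). lia. }
      assert (u2 < u3)%nat.
      { destruct (le_lt_dec u3 u2) as [g|g]; [|exact g].
        assert (u3 * M k2 <= u2 * M k2)%nat by (apply Nat.mul_le_mono_r; lia). lia. }
      lia.
    + pose proof (sep _ _ _ h H3). pose proof (inB_ge _ _ H1). lia.
  - pose proof (sep _ _ _ h H3). pose proof (inB_ge _ _ H2). lia.
Qed.

Lemma part2 : exists A : nat -> Prop,
     subset_posnat A /\ fractionally_dense A /\ (forall n : nat, (3 <= n)%nat -> ~ has_AP A n).
Proof.
  exists A2. split; [|split].
  - intros a [k [u [Hu ->]]]. apply u_bound in Hu. pose proof (M_pos k). nia.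
  - intros x. split.
    + intros Hc. destruct (Rle_or_lt 0 x) as [h|h]; [exact h|].
      destruct (Hc (-x) ltac:(lra)) as [y [[a [a' [_ [_ ->]]]] Hr]].
      apply Rabs_def2 in Hr.
      assert (0 <= INR a / INR a').
      { unfold Rdiv. apply Rmult_le_pos; [apply pos_INR|]. 
        destruct (Req_dec (INR a') 0) as [z|z]; [rewrite z, Rinv_0; lra|].
        left. apply Rinv_0_lt_compat. pose proof (pos_INR a'). lra. }
      lra.
    + intros hx eps heps.
      destruct (archimed (/ eps)) as [U1 U2].
      set (m := Z.to_nat (up (/ eps))).
      assert (Hm : INR m = IZR (up (/eps))).
      { unfold m. rewrite INR_IZR_INZ, Z2Nat.id; [reflexivity|].
        apply le_IZR. pose proof (Rinv_0_lt_compat eps heps). lra. }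
      assert (Hm1 : (1 <= m)%nat).
      { assert (0 < INR m) by (pose proof (Rinv_0_lt_compat eps heps); lra).
        destruct m; simpl in *; [lra|lia]. }
      destruct (archimed (x * INR m)) as [V1 V2].
      set (n := Z.to_nat (up (x * INR m))).
      assert (Hn : INR n = IZR (up (x * INR m))).
      { unfold n. rewrite INR_IZR_INZ, Z2Nat.id; [reflexivity|].
        apply le_IZR. pose proof (pos_INR m). nra. }
      assert (Hn1 : (1 <= n)%nat).
      { assert (0 < INR n) by (pose proof (pos_INR m); nra).
        destruct n; simpl in *; [lra|lia]. }
      set (k := to_nat (n - 1, m - 1)%nat).
      assert (Ek : of_nat k = (n-1, m-1)%nat) by apply cancel_of_to.
      assert (Hmp : 0 < INR m) by (apply le_INR in Hm1; simpl in Hm1; lra).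
      exists (INR n / INR m). split.
      * exists (n * M k)%nat, (m * M k)%nat. split; [|split].
        -- exists k, n. rewrite Ek. simpl. split; [left; lia|reflexivity].
        -- exists k, m. rewrite Ek. simpl. split; [right; lia|reflexivity].
        -- rewrite !mult_INR. pose proof (M_pos k) as P. apply le_INR in P. simpl in P.
           field. split; lra.
      *         assert (E1 : INR n / INR m - x = (INR n - x * INR m) / INR m) by (field; lra).
        rewrite E1.
        assert (Hq : 0 < (INR n - x * INR m) / INR m) by (apply Rdiv_lt_0_compat; lra).
        rewrite Rabs_right by lra.
        apply (Rmult_lt_reg_r (INR m)); [lra|].
        unfold Rdiv. rewrite Rmult_assoc, Rinv_l by lra. rewrite Rmult_1_r.
        assert (1 < eps * INR m).
        { rewrite Hm. assert (eps * / eps = 1) by (field; lra).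
          assert (eps * / eps < eps * IZR (up (/ eps))) by (apply Rmult_lt_compat_l; lra). lra. }
        lra.
  - intros n Hn [c [d [Hd HA]]].
    apply (no3 (c + 0 * d) (c + 1 * d) (c + 2 * d)); try (apply HA; lia); lia.
Qed.
End P2.

Theorem mainTheorem4 :
  (exists A : nat -> Prop,
     subset_posnat A /\ (forall n : nat, has_AP A n) /\ ~ fractionally_dense A) /\
  (exists A : nat -> Prop,
     subset_posnat A /\ fractionally_dense A /\ (forall n : nat, (3 <= n)%nat -> ~ has_AP A n)).
Proof. split; [exact P1.part1 | exact P2.part2]. Qed.
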